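(* Let $X$ and $Y$ be compact Hausdorff spaces, and let $E\subseteq C(X)$ and $F\subseteq C(Y)$ be Riesz subspaces, dense for the supremum norm, containing the respective constant functions. Let $G_1,G_2$ be Archimedean Riesz spaces and $\phi_i:E\times F\to G_i$ ($i=1,2$) be bi-injective Riesz bimorphisms. For $i=1,2$ let $E\overline{\otimes}_{\phi_i}F$ denote the Riesz subspace of $G_i$ generated by $\phi_i(E\times F)$. Then there is a unique Riesz isomorphism $T:E\overline{\otimes}_{\phi_1}F\to E\overline{\otimes}_{\phi_2}F$ such that $T\circ\phi_1=\phi_2$.
   Context: A linear map $T$ between Riesz spaces is a Riesz homomorphism if $T(x\vee y)=Tx\vee Ty$; a Riesz isomorphism is a bijective Riesz homomorphism. A bilinear map $\phi:E\times F\to G$ is a Riesz bimorphism if $\phi(\cdot,y)$ is a Riesz homomorphism for every $y\in F_+$ and $\phi(x,\cdot)$ is a Riesz homomorphism for every $x\in E_+$. $\phi$ is bi-injective if $\phi(x,y)=0$ implies $x=0$ or $y=0$. *)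

(* Defs.v *)
From HB Require Import structures.
From mathcomp Require Import all_boot all_order all_algebra.
From mathcomp Require Import all_classical all_reals topology normedtype.
Set Implicit Arguments. Unset Strict Implicit. Unset Printing Implicit Defensive.
Import Order.TTheory GRing.Theory Num.Theory numFieldNormedType.Exports.
Local Open Scope ring_scope.
Local Open Scope classical_set_scope.

Definition riesz_space (R : realType) (G : lmodType R)
    (le : G -> G -> Prop) (join : G -> G -> G) : Prop :=
  (forall x, le x x) /\
  (forall x y, le x y -> le y x -> x = y) /\
  (forall x y z, le x y -> le y z -> le x z) /\
  (forall x y z, le x y -> le (x + z) (y + z)) /\
  (forall (a : R) x y, 0 <= a -> le x y -> le (a *: x) (a *: y)) /\
  (forall x y, [/\ le x (join x y), le y (join x y)
                     & forall z, le x z -> le y z -> le (join x y) z]).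

Definition archimedean_riesz_space (R : realType) (G : lmodType R)
    (le : G -> G -> Prop) (join : G -> G -> G) : Prop :=
  riesz_space le join /\
  forall x y : G, le 0 x -> (forall n : nat, le (n%:R *: x) y) -> x = 0.

Definition riesz_subspace (R : realType) (G : lmodType R)
    (join : G -> G -> G) (V : set G) : Prop :=
  [/\ V 0, (forall x y, V x -> V y -> V (x + y)),
      (forall (a : R) x, V x -> V (a *: x))
    & (forall x y, V x -> V y -> V (join x y))].

Definition riesz_span (R : realType) (G : lmodType R)
    (join : G -> G -> G) (S : set G) : set G :=
  fun g => forall V, riesz_subspace join V -> S `<=` V -> V g.

Definition riesz_subspace_CX (R : realType) (X : topologicalType)
    (E : set (X -> R)) : Prop :=
  [/\ (forall f, E f -> continuous f),
      E (fun _ => 0),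
      (forall f g, E f -> E g -> E (fun x => f x + g x)),
      (forall (a : R) f, E f -> E (fun x => a * f x))
    & (forall f g, E f -> E g -> E (fun x => Num.max (f x) (g x)))].

Definition sup_dense (R : realType) (X : topologicalType) (E : set (X -> R)) : Prop :=
  forall f : X -> R, continuous f -> forall eps : R, 0 < eps ->
    exists2 g, E g & forall x, `|f x - g x| < eps.

Definition contains_constants (R : realType) (X : topologicalType)
    (E : set (X -> R)) : Prop := forall c : R, E (fun _ => c).

Definition riesz_hom_on (R : realType) (G H : lmodType R)
    (joinG : G -> G -> G) (joinH : H -> H -> H) (V : set G) (T : G -> H) : Prop :=
  (forall (a b : R) x y, V x -> V y -> T (a *: x + b *: y) = a *: T x + b *: T y) /\
  (forall x y, V x -> V y -> T (joinG x y) = joinH (T x) (T y)).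

Definition riesz_bimorphism (R : realType) (X Y : topologicalType)
    (E : set (X -> R)) (F : set (Y -> R)) (G : lmodType R)
    (join : G -> G -> G) (phi : (X -> R) -> (Y -> R) -> G) : Prop :=
  (forall y, F y -> forall (a b : R) f g, E f -> E g ->
      phi (fun t => a * f t + b * g t) y = a *: phi f y + b *: phi g y) /\
  (forall x, E x -> forall (a b : R) f g, F f -> F g ->
      phi x (fun t => a * f t + b * g t) = a *: phi x f + b *: phi x g) /\
  (forall y, F y -> (forall t, 0 <= y t) -> forall f g, E f -> E g ->
      phi (fun t => Num.max (f t) (g t)) y = join (phi f y) (phi g y)) /\
  (forall x, E x -> (forall t, 0 <= x t) -> forall f g, F f -> F g ->
      phi x (fun t => Num.max (f t) (g t)) = join (phi x f) (phi x g)).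

Definition bi_injective (R : realType) (X Y : topologicalType)
    (E : set (X -> R)) (F : set (Y -> R)) (G : lmodType R)
    (phi : (X -> R) -> (Y -> R) -> G) : Prop :=
  forall f g, E f -> F g -> phi f g = 0 -> f = (fun _ => 0) \/ g = (fun _ => 0).

Definition riesz_tensor (R : realType) (X Y : topologicalType)
    (E : set (X -> R)) (F : set (Y -> R)) (G : lmodType R)
    (join : G -> G -> G) (phi : (X -> R) -> (Y -> R) -> G) : set G :=
  riesz_span join [set phi f g | f in E & g in F].

Definition riesz_iso_onto (R : realType) (G H : lmodType R)
    (joinG : G -> G -> G) (joinH : H -> H -> H) (V : set G) (W : set H)
    (T : G -> H) : Prop :=
  [/\ riesz_hom_on joinG joinH V T, (forall x, V x -> W (T x)),
      (forall x y, V x -> V y -> T x = T y -> x = y)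
    & (forall z, W z -> exists2 x, V x & T x = z)].

(* Main.v *)
Require Import Defs.
From Stdlib Require List.
From HB Require Import structures.
From mathcomp Require Import all_boot all_order all_algebra.
From mathcomp Require Import all_classical all_reals topology normedtype.
From mathcomp Require Import ring lra.
Import Order.TTheory GRing.Theory Num.Theory numFieldNormedType.Exports.
Set Implicit Arguments. Unset Strict Implicit. Unset Printing Implicit Defensive.
Local Open Scope ring_scope.
Local Open Scope classical_set_scope.

Section RieszAlg.
Variables (R : realType) (G : lmodType R) (le : G -> G -> Prop) (join : G -> G -> G).
Hypothesis hG : riesz_space le join.

Lemma lrefl x : le x x. Proof. by case: hG => H _; apply: H. Qed.
Lemma lanti x y : le x y -> le y x -> x = y. Proof. by case: hG => _ [H _]; apply: H. Qed.
Lemma ltrans x y z : le x y -> le y z -> le x z.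
Proof. by case: hG => _ [_ []] H _; apply: H. Qed.
Lemma ladd x y z : le x y -> le (x + z) (y + z).
Proof. by case: hG => _ [_ [_ []]] H _; apply: H. Qed.
Lemma lscale (a : R) x y : 0 <= a -> le x y -> le (a *: x) (a *: y).
Proof. by case: hG => _ [_ [_ [_ []]]] H _; apply: H. Qed.
Lemma ljl x y : le x (join x y).
Proof. by case: hG => _ [_ [_ [_ [_ H]]]]; case: (H x y). Qed.
Lemma ljr x y : le y (join x y).
Proof. by case: hG => _ [_ [_ [_ [_ H]]]]; case: (H x y). Qed.
Lemma ljlub x y z : le x z -> le y z -> le (join x y) z.
Proof. by case: hG => _ [_ [_ [_ [_ H]]]]; case: (H x y) => _ _; apply. Qed.

Lemma laddl x y z : le y z -> le (x + y) (x + z).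
Proof. by rewrite ![x + _]addrC; apply: ladd. Qed.
Lemma ladd2 x y z w : le x y -> le z w -> le (x + z) (y + w).
Proof. move=> h1 h2; apply: (ltrans (ladd z h1)); exact: laddl. Qed.
Lemma lsubP x y : le 0 (y - x) -> le x y.
Proof. by move=> /(ladd x); rewrite add0r subrK. Qed.
Lemma lsubP' x y : le x y -> le 0 (y - x).
Proof. by move=> /(ladd (- x)); rewrite subrr. Qed.
Lemma lopp x y : le x y -> le (- y) (- x).
Proof.
move=> /(ladd (- x - y)); rewrite addrA subrr sub0r.
by rewrite addrC subrK.
Qed.
Lemma lscale0 (a : R) x : 0 <= a -> le 0 x -> le 0 (a *: x).
Proof. by move=> a0 /(lscale a0); rewrite scaler0. Qed.

Lemma join_trans a b c : join (a + b) (a + c) = a + join b c.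
Proof.
apply: lanti.
  by apply: ljlub; apply: laddl; [apply: ljl|apply: ljr].
have h : le (join b c) (- a + join (a + b) (a + c)).
  apply: ljlub.
    by rewrite -{1}(addKr a b); apply: laddl; apply: ljl.
  by rewrite -{1}(addKr a c); apply: laddl; apply: ljr.
by have := laddl a h; rewrite addNKr.
Qed.

Lemma join_id x : join x x = x.
Proof. by apply: lanti; [apply: ljlub; apply: lrefl| apply: ljl]. Qed.

Lemma lsub_le x y z : le (x - y) z -> le x (y + z).
Proof. by move=> /(laddl y); rewrite addrC subrK. Qed.
Lemma lle_sub x y z : le x (y + z) -> le (x - y) z.
Proof. by move=> /(ladd (- y)); rewrite addrAC subrr add0r. Qed.

End RieszAlg.

Inductive term (R X Y : Type) : Type :=
| TZ | TG of (X -> R) & (Y -> R) | TA of term R X Y & term R X Y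
| TS of R & term R X Y | TJ of term R X Y & term R X Y.
Arguments TZ {R X Y}.

Section Terms.
Variables (R : realType) (X Y : Type).
Implicit Types (t : term R X Y).

Fixpoint evalG (G : lmodType R) (join : G -> G -> G) (al : (X -> R) -> (Y -> R) -> G) t : G :=
  match t with
  | TZ => 0
  | TG f g => al f g
  | TA s u => evalG join al s + evalG join al u
  | TS a s => a *: evalG join al s
  | TJ s u => join (evalG join al s) (evalG join al u)
  end.

Fixpoint gok (P : (X -> R) -> (Y -> R) -> Prop) t : Prop :=
  match t with
  | TZ => True
  | TG f g => P f g
  | TA s u => gok P s /\ gok P u
  | TS _ s => gok P s
  | TJ s u => gok P s /\ gok P u
  end.

Fixpoint Kt t : R :=
  match t with
  | TZ => 0
  | TG _ _ => 1
  | TA s u => Kt s + Kt u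
  | TS a s => `|a| * Kt s
  | TJ s u => Kt s + Kt u
  end.

Lemma Kt_ge0 t : 0 <= Kt t.
Proof.
elim: t => [|f g|s hs u hu|a s hs|s hs u hu] //=; try exact: addr_ge0.
exact: mulr_ge0.
Qed.

Lemma gok_impl (P Q : (X -> R) -> (Y -> R) -> Prop) t :
  (forall f g, P f g -> Q f g) -> gok P t -> gok Q t.
Proof.
move=> PQ; elim: t => [|f g|s hs u hu|a s hs|s hs u hu] //=; try tauto.
exact: PQ.
Qed.

Variables (G : lmodType R) (le : G -> G -> Prop) (join : G -> G -> G).
Hypothesis hG : riesz_space le join.

Lemma lKle (d : G) (K1 K2 : R) : le 0 d -> 0 <= K2 -> le (K1 *: d) ((K1 + K2) *: d).
Proof.
move=> d0 k2; apply: (lsubP hG); rewrite scalerDl addrAC subrr add0r.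
exact: (lscale0 hG).
Qed.

Lemma lip (al be : (X -> R) -> (Y -> R) -> G) (d : G) t :
  le 0 d ->
  gok (fun f g => le (al f g - be f g) d /\ le (be f g - al f g) d) t ->
  le (evalG join al t - evalG join be t) (Kt t *: d) /\
  le (evalG join be t - evalG join al t) (Kt t *: d).
Proof.
move=> d0; elim: t => /= [|f g|s hs u hu|a s hs|s hs u hu].
- by rewrite subrr scale0r; split; apply: (lrefl hG).
- by rewrite scale1r.
- move=> [/hs [h1 h2] /hu [h3 h4]]; rewrite scalerDl.
  by split; rewrite opprD addrACA; apply: (ladd2 hG).
- move=> /hs [h1 h2]; rewrite -!scalerBr.
  have [a0|a0] := leP 0 a.
    rewrite (ger0_norm a0) -scalerA; split; exact: (lscale hG).
  rewrite (ltr0_norm a0) -scalerA.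
  have a0' : 0 <= - a by rewrite oppr_ge0 ltW.
  have e1 : forall v w : G, a *: (v - w) = (- a) *: (w - v).
    by move=> v w; rewrite scaleNr -scalerN opprB.
  by rewrite !e1; split; apply: (lscale hG).
- move=> [/hs [h1 h2] /hu [h3 h4]].
  have k1 := Kt_ge0 s; have k2 := Kt_ge0 u.
  have A : forall a1 a2 b1 b2 : G, le (a1 - b1) (Kt s *: d) ->
     le (a2 - b2) (Kt u *: d) ->
     le (join a1 a2 - join b1 b2) ((Kt s + Kt u) *: d).
    move=> a1 a2 b1 b2 e1 e2; apply: (lle_sub hG); apply: (ljlub hG).
      apply: (ltrans hG (lsub_le hG e1)); apply: (ladd2 hG); first exact: (ljl hG).
      exact: lKle.
    apply: (ltrans hG (lsub_le hG e2)); apply: (ladd2 hG); first exact: (ljr hG).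
    by rewrite addrC; apply: lKle.
  by split; apply: A.
Qed.

Lemma evalG_zero t : evalG join (fun _ _ => 0) t = 0.
Proof.
elim: t => [|f g|s hs u hu|a s hs|s hs u hu] //=.
- by rewrite hs hu addr0.
- by rewrite hs scaler0.
- by rewrite hs hu (join_id hG).
Qed.

End Terms.

Lemma fin_cover (T : topologicalType) (U : T -> set T) :
  compact [set: T] -> (forall x, open (U x)) -> (forall x, U x x) ->
  exists l : seq T, forall x, exists x0, List.In x0 l /\ U x0 x.
Proof.
move=> cT oU Ux; apply: contrapT => H.
pose B := fun l : seq T => [set x | forall x0, List.In x0 l -> ~ U x0 x].
have FF : Filter (filter_from setT B).
  apply: filter_from_filter; first by exists [::].
  move=> i j _ _; exists (i ++ j) => // x Bx; split => x0 h; apply: Bx;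
    apply: List.in_or_app; tauto.
have PF : ProperFilter (filter_from setT B).
  apply: filter_from_proper => // l _.
  apply: contrapT => nB; apply: H; exists l => x; apply: contrapT => nx.
  by apply: nB; exists x => x0 hin hU; apply: nx; exists x0.
have [p [_ cp]] := cT _ PF filterT.
have A1 : filter_from setT B (B [:: p]) by exists [:: p].
have A2 : nbhs p (U p) by apply: open_nbhs_nbhs; split.
have [z [hz1 hz2]] := cp _ _ A1 A2.
by apply: (hz1 p) => //; left.
Qed.

Section TermFun.
Variables (R : realType) (X Y : Type).
Implicit Types (t : term R X Y).

Fixpoint evalR t (x : X) (y : Y) : R :=
  match t with
  | TZ => 0
  | TG f g => f x * g y
  | TA s u => evalR s x y + evalR u x y
  | TS a s => a * evalR s x y
  | TJ s u => Num.max (evalR s x y) (evalR u x y)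
  end.

Definition wf (E : set (X -> R)) (F : set (Y -> R)) t := gok (fun f g => E f /\ F g) t.

Fixpoint gamT t : Y -> R :=
  match t with
  | TZ => fun _ => 0
  | TG f g => fun y => Num.max (g y) ((-1) * g y)
  | TA s u => fun y => gamT s y + gamT u y
  | TS _ s => gamT s
  | TJ s u => fun y => gamT s y + gamT u y
  end.

Fixpoint Dt t (x0 : X) : X -> R :=
  match t with
  | TZ => fun _ => 0
  | TG f g => fun x => Num.max (f x + - f x0) ((-1) * (f x + - f x0))
  | TA s u => fun x => Dt s x0 x + Dt u x0 x
  | TS _ s => Dt s x0
  | TJ s u => fun x => Dt s x0 x + Dt u x0 x
  end.

Lemma gok_and (P Q : (X -> R) -> (Y -> R) -> Prop) t :
  gok P t -> gok Q t -> gok (fun f g => P f g /\ Q f g) t.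
Proof. elim: t => [|f g|s hs u hu|a s hs|s hs u hu] //=; try tauto. Qed.

Lemma gamT_ge0 t y : 0 <= gamT t y.
Proof.
elim: t => [|f g|s hs u hu|a s hs|s hs u hu] //=; try exact: addr_ge0.
by rewrite mulN1r maxrN.
Qed.

Lemma gamT_bound t : gok (fun f g => forall y, `|g y| <= gamT t y) t.
Proof.
elim: t => [|f g|s hs u hu|a s hs|s hs u hu] //=.
- by move=> y; rewrite mulN1r maxrN.
all: split; [apply: gok_impl hs | apply: gok_impl hu] => f g h y;
    apply: le_trans (h y) _; rewrite ?lerDl ?lerDr gamT_ge0 //.
Qed.

Lemma Dt_ge0 t x0 x : 0 <= Dt t x0 x.
Proof.
elim: t => [|f g|s hs u hu|a s hs|s hs u hu] //=; try exact: addr_ge0.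
by rewrite mulN1r maxrN.
Qed.

Lemma Dt_bound t x0 : gok (fun f g => forall x, `|f x - f x0| <= Dt t x0 x) t.
Proof.
elim: t => [|f g|s hs u hu|a s hs|s hs u hu] //=.
- by move=> y; rewrite mulN1r maxrN.
all: split; [apply: gok_impl hs | apply: gok_impl hu] => f g h y;
    apply: le_trans (h y) _; rewrite ?lerDl ?lerDr Dt_ge0 //.
Qed.

Lemma Dt_self t x0 : Dt t x0 x0 = 0.
Proof.
elim: t => [|f g|s hs u hu|a s hs|s hs u hu] //=.
- by rewrite subrr mulr0 maxxx.
- by rewrite hs hu addr0.
- by rewrite hs hu addr0.
Qed.

End TermFun.


Lemma zid (V : zmodType) (A B C D : V) :
  A + C - (D + B) + (A - C + (D - B)) = A - B + (A - B).
Proof.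
rewrite opprD addrACA [X in X + _ = _]addrACA subrr addr0.
by rewrite [X in _ + X = _]addrACA addNr add0r [RHS]addrACA.
Qed.

Lemma half_twice (R : realType) (G : lmodType R) (v : G) : (2^-1 : R) *: (v + v) = v.
Proof.
by rewrite -mulr2n -(scaler_nat 2 v) scalerA mulVf ?pnatr_eq0 // scale1r.
Qed.

Section Bimorph.
Variables (R : realType) (X Y : topologicalType) (E : set (X -> R)) (F : set (Y -> R)).
Hypotheses (hE : riesz_subspace_CX E) (hEc : contains_constants E)
  (hF : riesz_subspace_CX F) (hFc : contains_constants F).

Lemma E0 : E (fun _ => 0). Proof. by case: hE. Qed.
Lemma EC c : E (fun _ => c). Proof. exact: hEc. Qed.
Lemma Eadd f g : E f -> E g -> E (fun x => f x + g x). Proof. by case: hE => _ _ H _ _; apply: H. Qed.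
Lemma Escale a f : E f -> E (fun x => a * f x). Proof. by case: hE => _ _ _ H _; apply: H. Qed.
Lemma Emax f g : E f -> E g -> E (fun x => Num.max (f x) (g x)). Proof. by case: hE => _ _ _ _ H; apply: H. Qed.
Lemma Econt f : E f -> continuous f. Proof. by case: hE => H _ _ _ _; apply: H. Qed.
Lemma Eopp f : E f -> E (fun x => - f x).
Proof. move=> /(Escale (-1)); congr E; apply/funext => x; by rewrite mulN1r. Qed.
Lemma Esub f g : E f -> E g -> E (fun x => f x - g x).
Proof. by move=> hf /Eopp hg; apply: Eadd. Qed.

Lemma F0 : F (fun _ => 0). Proof. by case: hF. Qed.
Lemma FC c : F (fun _ => c). Proof. exact: hFc. Qed.
Lemma Fadd f g : F f -> F g -> F (fun x => f x + g x). Proof. by case: hF => _ _ H _ _; apply: H. Qed.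
Lemma Fscale a f : F f -> F (fun x => a * f x). Proof. by case: hF => _ _ _ H _; apply: H. Qed.
Lemma Fmax f g : F f -> F g -> F (fun x => Num.max (f x) (g x)). Proof. by case: hF => _ _ _ _ H; apply: H. Qed.
Lemma Fcont f : F f -> continuous f. Proof. by case: hF => H _ _ _ _; apply: H. Qed.
Lemma Fopp f : F f -> F (fun x => - f x).
Proof. move=> /(Fscale (-1)); congr F; apply/funext => x; by rewrite mulN1r. Qed.
Lemma Fsub f g : F f -> F g -> F (fun x => f x - g x).
Proof. by move=> hf /Fopp hg; apply: Fadd. Qed.

Variables (G : lmodType R) (le : G -> G -> Prop) (join : G -> G -> G).
Hypothesis hG : riesz_space le join.
Variable phi : (X -> R) -> (Y -> R) -> G.
Hypothesis hphi : riesz_bimorphism E F join phi.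

Lemma phiL1 a b f g y : F y -> E f -> E g ->
  phi (fun t => a * f t + b * g t) y = a *: phi f y + b *: phi g y.
Proof. by case: hphi => H _ Fy Ef Eg; apply: H. Qed.
Lemma phiL2 a b f g x : E x -> F f -> F g ->
  phi x (fun t => a * f t + b * g t) = a *: phi x f + b *: phi x g.
Proof. by case: hphi => _ [H _] Ex Ff Fg; apply: H. Qed.
Lemma phiJ1 y f g : F y -> (forall t, 0 <= y t) -> E f -> E g ->
  phi (fun t => Num.max (f t) (g t)) y = join (phi f y) (phi g y).
Proof. by case: hphi => _ [_ [H _]] Fy y0 Ef Eg; apply: H. Qed.
Lemma phiJ2 x f g : E x -> (forall t, 0 <= x t) -> F f -> F g ->
  phi x (fun t => Num.max (f t) (g t)) = join (phi x f) (phi x g).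
Proof. by case: hphi => _ [_ [_ H]] Ex x0 Ff Fg; apply: H. Qed.

Lemma phiZ1 a f y : F y -> E f -> phi (fun t => a * f t) y = a *: phi f y.
Proof.
move=> Fy Ef; have := phiL1 a 0 Fy Ef Ef; rewrite scale0r addr0 => <-.
by congr phi; apply/funext => t; rewrite mul0r addr0.
Qed.
Lemma phiZ2 a f x : E x -> F f -> phi x (fun t => a * f t) = a *: phi x f.
Proof.
move=> Ex Ff; have := phiL2 a 0 Ex Ff Ff; rewrite scale0r addr0 => <-.
by congr phi; apply/funext => t; rewrite mul0r addr0.
Qed.
Lemma phiC1 c y : F y -> phi (fun _ => c) y = c *: phi (fun _ => 1) y.
Proof.
move=> Fy; have := phiZ1 c Fy (EC 1) => <-.
by congr phi; apply/funext => t; rewrite mulr1.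
Qed.
Lemma phi0l y : F y -> phi (fun _ => 0) y = 0.
Proof.
move=> Fy; have := phiZ1 0 Fy E0; rewrite scale0r => <-.
by congr phi; apply/funext => t; rewrite mul0r.
Qed.
Lemma phi0r x : E x -> phi x (fun _ => 0) = 0.
Proof.
move=> Ex; have := phiZ2 0 Ex F0; rewrite scale0r => <-.
by congr phi; apply/funext => t; rewrite mul0r.
Qed.
Lemma phiD1 f g y : F y -> E f -> E g -> phi (fun t => f t + g t) y = phi f y + phi g y.
Proof.
move=> Fy Ef Eg; have := phiL1 1 1 Fy Ef Eg; rewrite !scale1r => <-.
by congr phi; apply/funext => t; rewrite !mul1r.
Qed.
Lemma phiD2 f g x : E x -> F f -> F g -> phi x (fun t => f t + g t) = phi x f + phi x g.
Proof.
move=> Ex Ff Fg; have := phiL2 1 1 Ex Ff Fg; rewrite !scale1r => <-.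
by congr phi; apply/funext => t; rewrite !mul1r.
Qed.
Lemma phiN1 f y : F y -> E f -> phi (fun t => - f t) y = - phi f y.
Proof.
move=> Fy Ef; have := phiZ1 (-1) Fy Ef; rewrite scaleN1r => <-.
by congr phi; apply/funext => t; rewrite mulN1r.
Qed.
Lemma phiN2 f x : E x -> F f -> phi x (fun t => - f t) = - phi x f.
Proof.
move=> Ex Ff; have := phiZ2 (-1) Ex Ff; rewrite scaleN1r => <-.
by congr phi; apply/funext => t; rewrite mulN1r.
Qed.
Lemma phiB1 f g y : F y -> E f -> E g -> phi (fun t => f t - g t) y = phi f y - phi g y.
Proof. by move=> Fy Ef Eg; rewrite phiD1 ?phiN1 //; apply: Eopp. Qed.
Lemma phiB2 f g x : E x -> F f -> F g -> phi x (fun t => f t - g t) = phi x f - phi x g.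
Proof. by move=> Ex Ff Fg; rewrite phiD2 ?phiN2 //; apply: Fopp. Qed.

Lemma ppos f g : E f -> F g -> (forall t, 0 <= f t) -> (forall t, 0 <= g t) ->
  le 0 (phi f g).
Proof.
move=> Ef Fg f0 g0.
have := phiJ2 Ef f0 Fg F0; rewrite phi0r //.
have -> : (fun t => Num.max (g t) 0) = g by apply/funext => t; rewrite max_l.
by move=> ->; apply: (ljr hG).
Qed.

Lemma pmono r rho g gam : E r -> E rho -> F g -> F gam ->
  (forall t, `|r t| <= rho t) -> (forall t, `|g t| <= gam t) ->
  le (phi r g) (phi rho gam).
Proof.
move=> Er Erho Fg Fgam hr hg; apply: (lsubP hG).
have P1 : le 0 (phi (fun x => rho x - r x) (fun y => gam y + g y)).
  apply: ppos; [exact: Esub|exact: Fadd| |].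
    move=> t; rewrite subr_ge0; exact: le_trans (ler_norm _) (hr t).
  move=> t; rewrite -lerBlDr sub0r; apply: le_trans (hg t).
  by rewrite -normrN ler_norm.
have P2 : le 0 (phi (fun x => rho x + r x) (fun y => gam y - g y)).
  apply: ppos; [exact: Eadd|exact: Fsub| |].
    move=> t; rewrite -lerBlDr sub0r; apply: le_trans (hr t).
    by rewrite -normrN ler_norm.
  move=> t; rewrite subr_ge0; exact: le_trans (ler_norm _) (hg t).
have P := ladd2 hG P1 P2; rewrite addr0 in P.
have e1 : phi (fun x => rho x - r x) (fun y => gam y + g y) =
   phi rho gam + phi rho g - (phi r gam + phi r g).
  by rewrite (phiB1 (Fadd Fgam Fg) Erho Er) (phiD2 Erho Fgam Fg) (phiD2 Er Fgam Fg).
have e2 : phi (fun x => rho x + r x) (fun y => gam y - g y) =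
   phi rho gam - phi rho g + (phi r gam - phi r g).
  by rewrite (phiD1 (Fsub Fgam Fg) Erho Er) (phiB2 Erho Fgam Fg) (phiB2 Er Fgam Fg).
rewrite e1 e2 zid in P.
have h2 : (0:R) <= 2^-1 by rewrite invr_ge0 ler0n.
have := lscale hG h2 P.
by rewrite scaler0 half_twice.
Qed.



Lemma gamT_F t : wf E F t -> F (gamT t).
Proof.
elim: t => [|f g|s hs u hu|a s hs|s hs u hu] /=.
- by move=> _; exact: F0.
- by move=> [_ Fg]; apply: Fmax => //; apply: Fscale.
- by move=> [/hs h1 /hu h2]; apply: Fadd.
- exact: hs.
- by move=> [/hs h1 /hu h2]; apply: Fadd.
Qed.

Lemma Dt_E t x0 : wf E F t -> E (Dt t x0).
Proof.
elim: t => [|f g|s hs u hu|a s hs|s hs u hu] /=.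
- by move=> _; exact: E0.
- move=> [Ef _]; have h : E (fun x => f x + - f x0) by apply: Eadd => //; apply: EC.
  by apply: Emax => //; apply: Escale.
- by move=> [/hs h1 /hu h2]; apply: Eadd.
- exact: hs.
- by move=> [/hs h1 /hu h2]; apply: Eadd.
Qed.

Lemma slice_F t x0 : wf E F t -> F (evalR t x0).
Proof.
elim: t => [|f g|s hs u hu|a s hs|s hs u hu] /=.
- by move=> _; exact: F0.
- by move=> [_ Fg]; apply: Fscale.
- by move=> [/hs h1 /hu h2]; apply: Fadd.
- by move=> /hs h; apply: Fscale.
- by move=> [/hs h1 /hu h2]; apply: Fmax.
Qed.

Lemma evalG_slice t x0 : wf E F t ->
  evalG join (fun f g => phi (fun _ => 1) (fun y => f x0 * g y)) t =
  phi (fun _ => 1) (evalR t x0).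
Proof.
have E1 := EC 1.
elim: t => [|f g|s hs u hu|a s hs|s hs u hu] /=.
- by move=> _; rewrite phi0r.
- by [].
- move=> [ws wu]; rewrite hs // hu //.
  by rewrite -(phiD2 E1 (slice_F x0 ws) (slice_F x0 wu)).
- move=> ws; have ws' : wf E F s := ws; rewrite hs //.
  by rewrite -(phiZ2 a E1 (slice_F x0 ws')).
- move=> [ws wu]; rewrite hs // hu //.
  by rewrite -(phiJ2 E1 (fun _ => ler01) (slice_F x0 ws) (slice_F x0 wu)).
Qed.


Hypothesis harch : forall x y : G, le 0 x -> (forall n : nat, le (n%:R *: x) y) -> x = 0.
Hypothesis hX : compact [set: X].

Lemma posA t : wf E F t -> (forall x y, 0 <= evalR t x y) -> le 0 (evalG join phi t).
Proof.
move=> wft tpos.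
set u := evalG join phi t.
set K := Kt t; set gam := gamT t; set y0 := phi (fun _ => 1) gam.
have K0 : 0 <= K := Kt_ge0 t.
have Fgam : F gam := gamT_F wft.
have gam0 : forall y, 0 <= gam y := gamT_ge0 t.
have E1 := EC 1.
have y00 : le 0 y0 := ppos E1 Fgam (fun _ => ler01) gam0.
have [[xb _]|nX] := pselect (exists x : X, True); last first.
  have f0 : forall f : X -> R, f = (fun _ => 0).
    by move=> f; apply/funext => x; exfalso; apply: nX; exists x.
  have gk : gok (fun f g => le (phi f g - (fun _ _ => 0) f g) 0 /\
                            le ((fun _ _ => 0) f g - phi f g) 0) t.
    apply: gok_impl wft => f g [Ef Fg]; rewrite (f0 f) phi0l // subrr.
    by split; apply: (lrefl hG).
  have [_ h] := lip hG (lrefl hG 0) gk.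
  rewrite (evalG_zero hG) sub0r scaler0 in h.
  by have := lopp hG h; rewrite oppr0 opprK.
have main : forall eps, 0 < eps -> le (- (eps *: y0)) u.
  move=> eps eps0.
  pose dl := eps / (K + 1).
  have K1 : 0 < K + 1 by lra.
  have dl0 : 0 < dl by apply: divr_gt0.
  have Kdl : K * dl <= eps.
    rewrite /dl mulrA ler_pdivrMr //; nra.
  pose H x0 := fun x => Num.max (Dt t x0 x + - dl) 0.
  have EH x0 : E (H x0) by apply: Emax; [apply: Eadd; [apply: Dt_E|apply: EC]|apply: E0].
  have H0 x0 x : 0 <= H x0 x by rewrite /H le_max lexx orbT.
  pose rho x0 := fun x => dl + H x0 x.
  have Erho x0 : E (rho x0) by apply: Eadd; [apply: EC|apply: EH].
  pose hh x0 := fun x => (- K) * H x0 x.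
  have Ehh x0 : E (hh x0) by apply: Escale.
  have L : forall x0, le (- ((K * dl) *: y0) + phi (hh x0) gam) u.
    move=> x0.
    pose be := fun f g => phi (fun _ => 1) (fun y => f x0 * g y).
    have rho0 : forall x, 0 <= rho x0 x by move=> x; rewrite /rho; have := H0 x0 x; lra.
    have d0 : le 0 (phi (rho x0) gam) := ppos (Erho x0) Fgam rho0 gam0.
    have gk : gok (fun f g => le (phi f g - be f g) (phi (rho x0) gam) /\
                              le (be f g - phi f g) (phi (rho x0) gam)) t.
      apply: gok_impl (gok_and wft (gok_and (gamT_bound t) (Dt_bound t x0))).
      move=> f g [[Ef Fg] [bg bf]].
      have Ec : E (fun _ => f x0) := EC (f x0).
      have eb : be f g = phi (fun _ => f x0) g.
        by rewrite /be (phiZ2 (f x0) E1 Fg) (phiC1 (f x0) Fg).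
      have ed : phi f g - be f g = phi (fun x => f x - f x0) g.
        by rewrite eb (phiB1 Fg Ef Ec).
      have er : be f g - phi f g = phi (fun x => - (f x - f x0)) g.
        by rewrite -opprB ed (phiN1 Fg (Esub Ef Ec)).
      have bnd : forall x, `|f x - f x0| <= rho x0 x.
        move=> x; have h1 := bf x.
        have h2 : Dt t x0 x + - dl <= H x0 x by rewrite /H le_max lexx.
        rewrite /rho; lra.
      split; [rewrite ed | rewrite er]; apply: pmono => //.
      - exact: Esub.
      - by apply: Eopp; apply: Esub.
      - by move=> x; rewrite normrN.
    have [_ h2] := lip hG d0 gk.
    rewrite (evalG_slice x0 wft) in h2.
    have sp : le 0 (phi (fun _ => 1) (evalR t x0)).
      exact: (ppos E1 (slice_F x0 wft) (fun _ => ler01) (tpos x0)).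
    have h3 := lsub_le hG h2.
    have h4 := ltrans hG sp h3.
    have h5 := ladd hG (- (K *: phi (rho x0) gam)) h4.
    rewrite add0r addrK in h5.
    have eq : - (K *: phi (rho x0) gam) = - ((K * dl) *: y0) + phi (hh x0) gam.
      rewrite (phiD1 Fgam (EC dl) (EH x0)) (phiC1 dl Fgam) (phiZ1 (- K) Fgam (EH x0)).
      by rewrite scalerDr opprD scalerA scaleNr.
    by rewrite -eq.
  have oU : forall x0, open ((fun x0 => [set x | Dt t x0 x < dl]) x0).
    move=> x0; apply: (@open_comp _ _ (Dt t x0) [set r | r < dl]).
      by move=> x _; apply: (Econt (Dt_E x0 wft)).
    exact: open_lt.
  have sU : forall x0, (fun x0 => [set x | Dt t x0 x < dl]) x0 x0.
    by move=> x0 /=; rewrite Dt_self.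
  have [l hl] := fin_cover hX oU sU.
  pose fo := fun l' => foldr (fun x0 acc => fun x => Num.max (hh x0 x) (acc x)) (hh xb) l'.
  have Lfo : forall l', E (fo l') /\ le (- ((K * dl) *: y0) + phi (fo l') gam) u.
    elim=> [|a l' [IHE IHL]] /=; first by split; [apply: Ehh|apply: L].
    split; first by apply: Emax.
    rewrite (phiJ1 Fgam gam0 (Ehh a) IHE) -(join_trans hG).
    by apply: (ljlub hG) => //; apply: L.
  have hhle : forall x0 x, hh x0 x <= 0.
    by move=> x0 x; rewrite /hh mulNr oppr_le0; apply: mulr_ge0.
  have fo0 : fo l = fun _ => 0.
    apply/funext => x; apply/eqP; rewrite eq_le; apply/andP; split.
      elim: l {hl} => [|a l' IH] /=; first exact: hhle.
      by rewrite ge_max hhle.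
    have [x0 [inx0 ux0]] := hl x.
    have hx0 : hh x0 x = 0.
      rewrite /hh /H max_r ?mulr0 //; move: ux0 => /=; lra.
    rewrite -hx0; elim: l inx0 {hl} => [|a l' IH] //= [->|/IH h].
      by rewrite le_max lexx.
    by rewrite le_max h orbT.
  have [_ h] := Lfo l.
  rewrite fo0 phi0l // addr0 in h.
  have hle : le (- (eps *: y0)) (- ((K * dl) *: y0)).
    apply: (lopp hG); apply: (lsubP hG).
    rewrite -scalerBl; apply: (lscale0 hG) => //; lra.
  exact: (ltrans hG hle h).
set w := join (- u) 0.
have w0 : w = 0.
  apply: (harch (y := y0)); first exact: (ljr hG).
  case=> [|m]; first by rewrite scale0r.
  have m0 : (0 : R) < m.+1%:R by rewrite ltr0n.
  have mi : (0:R) < m.+1%:R^-1 by rewrite invr_gt0.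
  have := main _ mi => /(lopp hG); rewrite opprK => hu.
  have hw : le w (m.+1%:R^-1 *: y0).
    apply: (ljlub hG) => //; apply: (lscale0 hG) => //.
    by rewrite invr_ge0 ltW.
  have := lscale hG (ltW m0) hw.
  by rewrite scalerA mulfV ?gt_eqF // scale1r.
have : le (- u) 0 by rewrite -w0; apply: (ljl hG).
by move=> /(lopp hG); rewrite oppr0 opprK.
Qed.

End Bimorph.

Lemma riesz_R (R : realType) :
  riesz_space (G := R^o) (fun a b : R^o => a <= b) (fun a b : R^o => Num.max a b).
Proof.
split; first by move=> x; exact: lexx.
split; first by move=> x y h1 h2; apply: le_anti; rewrite h1 h2.
split; first by move=> x y z; exact: le_trans.
split; first by move=> x y z h; rewrite lerD2r.
split; first by move=> a x y a0 h; exact: ler_wpM2l.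
move=> x y; split; first by rewrite le_max lexx.
  by rewrite le_max lexx orbT.
by move=> z h1 h2; rewrite ge_max h1 h2.
Qed.

Lemma evalG_R (R : realType) (X Y : Type) (t : term R X Y) x y :
  evalG (G := R^o) (fun a b : R^o => Num.max a b) (fun f g => f x * g y) t = evalR t x y.
Proof. by elim: t => [|f g|s hs u hu|a s hs|s hs u hu] //=; rewrite ?hs ?hu. Qed.

Lemma max_cases (R : realType) (a b : R) :
  (Num.max a b = a /\ b <= a) \/ (Num.max a b = b /\ a <= b).
Proof.
rewrite /Num.max; case: ltP => h; [right|left]; split => //; exact: ltW.
Qed.

Section Bump.
Variables (R : realType) (T : topologicalType) (E : set (T -> R)).
Hypotheses (hE : riesz_subspace_CX E) (hEc : contains_constants E) (hEd : sup_dense E)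
  (hT : compact [set: T]) (hTs : hausdorff_space T).

Lemma bump x0 (U : set T) : open U -> U x0 ->
  exists f, [/\ E f, forall x, 0 <= f x <= 1, f x0 != 0 & forall x, ~ U x -> f x = 0].
Proof.
move=> oU Ux0.
have nT : normal_space T := compact_normal hTs hT.
have acc : accessible_space T := @hausdorff_accessible T hTs.
have c1 : closed [set x0] := @accessible_closed_set1 T acc x0.
have c2 : closed (~` U) := open_closedC oU.
have dis : [set x0] `&` ~` U = set0.
  by apply/seteqP; split => x // [/= -> nU]; exfalso; apply: nU.
have us := (proj1 (@normal_separatorP R T) nT) _ _ c1 c2 dis.
pose h := Urysohn (R := R) [set x0] (~` U).
have hc : continuous h := @Urysohn_continuous T R [set x0] (~` U).
have hx0 : h x0 = 0.
  have im : (h @` [set x0]) (h x0) by exists x0.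
  exact: (Urysohn_sub0 us im).
have hU : forall x, ~ U x -> h x = 1.
  move=> x nUx; have im : (h @` (~` U)) (h x) by exists x.
  exact: (Urysohn_sub1 us im).
have q4 : (0:R) < 1/4 by lra.
have [e Ee he] := hEd hc q4.
pose f := fun x => (-1) * Num.max ((-1) * Num.max ((-1) * e x + 3/4) 0) (-1).
have Ef : E f.
  apply: (Escale hE); apply: (Emax hE); last exact: (EC hEc).
  apply: (Escale hE); apply: (Emax hE); last exact: (EC hEc).
  by apply: (Eadd hE); [apply: (Escale hE)|apply: (EC hEc)].
have q1 : forall x, 0 <= f x <= 1.
  move=> x; rewrite /f.
  case: (max_cases ((-1) * Num.max ((-1) * e x + 3/4) 0) (-1)) => [[Eo h2]|[Eo h2]]; rewrite Eo;
  case: (max_cases ((-1) * e x + 3/4) 0) => [[Ei h1]|[Ei h1]]; rewrite ?Ei in h2 *; apply/andP; split; lra.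
exists f; split => //.
  have := he x0; rewrite hx0 sub0r normrN ltr_norml => /andP [h1 h2].
  rewrite /f; apply/negP => /eqP.
  case: (max_cases ((-1) * Num.max ((-1) * e x0 + 3/4) 0) (-1)) => [[Eo h4]|[Eo h4]]; rewrite Eo;
  case: (max_cases ((-1) * e x0 + 3/4) 0) => [[Ei h3]|[Ei h3]]; rewrite ?Ei in h4 *; lra.
move=> x nUx; have := he x; rewrite (hU x nUx) ltr_norml => /andP [h1 h2].
rewrite /f.
case: (max_cases ((-1) * Num.max ((-1) * e x + 3/4) 0) (-1)) => [[Eo h4]|[Eo h4]]; rewrite Eo;
  case: (max_cases ((-1) * e x + 3/4) 0) => [[Ei h3]|[Ei h3]]; rewrite ?Ei in h4 *; lra.
Qed.
End Bump.

Section Main2.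
Variables (R : realType) (X Y : topologicalType) (E : set (X -> R)) (F : set (Y -> R)).
Hypotheses (hE : riesz_subspace_CX E) (hEc : contains_constants E) (hEd : sup_dense E)
  (hF : riesz_subspace_CX F) (hFc : contains_constants F) (hFd : sup_dense F)
  (hX : compact [set: X]) (hXs : hausdorff_space X)
  (hY : compact [set: Y]) (hYs : hausdorff_space Y).
Variables (G : lmodType R) (le : G -> G -> Prop) (join : G -> G -> G).
Hypothesis hG : riesz_space le join.
Hypothesis harch : forall x y : G, le 0 x -> (forall n : nat, le (n%:R *: x) y) -> x = 0.
Variable phi : (X -> R) -> (Y -> R) -> G.
Hypotheses (hphi : riesz_bimorphism E F join phi) (hinj : bi_injective E F phi).

Lemma posB t : wf E F t -> evalG join phi t = 0 -> forall x y, evalR t x y = 0.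
Proof.
move=> wft t0 x0 y0; apply: contrapT => ne.
pose s := TJ t (TS (-1) t).
have ws : wf E F s by split.
have es : evalG join phi s = 0 by rewrite /= t0 scaler0 (join_id hG).
have sR : forall x y, evalR s x y = `|evalR t x y|.
  by move=> x y; rewrite /= mulN1r maxrN.
pose c := evalR s x0 y0.
have c0 : 0 < c by rewrite /c sR normr_gt0; apply/eqP.
pose K := Kt s; pose gam := gamT s; pose D := Dt s x0.
have K0 : 0 <= K := Kt_ge0 s.
have Fgam : F gam := gamT_F hF ws.
have ED : E D := Dt_E hE hEc x0 ws.
have lipR : forall x y, evalR s x0 y - evalR s x y <= K * (D x * gam y).
  move=> x y.
  have d0 : (0 : R) <= D x * gam y.
    by apply: mulr_ge0; [apply: Dt_ge0|apply: gamT_ge0].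
  have gk : gok (fun f g => (f x * g y - f x0 * g y : R) <= D x * gam y /\
                            (f x0 * g y - f x * g y : R) <= D x * gam y) s.
    apply: gok_impl (gok_and (gamT_bound s) (Dt_bound s x0)) => f g [bg bf].
    have e : `|f x * g y - f x0 * g y| = `|f x - f x0| * `|g y|.
      by rewrite -mulrBl normrM.
    have : `|f x * g y - f x0 * g y| <= D x * gam y.
      by rewrite e; apply: ler_pM => //; apply: normr_ge0.
    rewrite ler_norml => /andP [h1 h2]; split => //; lra.
  have [_ h2] := @lip R X Y R^o (fun a b : R^o => a <= b) (fun a b : R^o => Num.max a b)
    (riesz_R R) (fun f g => f x * g y) (fun f g => f x0 * g y) (D x * gam y) s d0 gk.
  by rewrite !evalG_R in h2; exact: h2.
pose V := [set y | 3/4 * c < evalR s x0 y] `&` [set y | gam y < gam y0 + 1].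
have oV : open V.
  apply: openI.
    apply: (@open_comp _ _ (evalR s x0) [set r | 3/4 * c < r]); last exact: open_gt.
    by move=> y _; exact: (Fcont hF (slice_F hF x0 ws)).
  apply: (@open_comp _ _ gam [set r | r < gam y0 + 1]); last exact: open_lt.
  by move=> y _; exact: (Fcont hF Fgam).
have Vy0 : V y0.
  have h34 : 3/4 * c < c by lra.
  by split => //=; lra.
pose U := [set x | (gam y0 + 1) * (K * D x) < c / 4].
have EU : E (fun x => (gam y0 + 1) * (K * D x)) by apply: (Escale hE); apply: (Escale hE).
have oU : open U.
  apply: (@open_comp _ _ (fun x => (gam y0 + 1) * (K * D x)) [set r | r < c / 4]).
    by move=> x _; exact: (Econt hE EU).
  exact: open_lt.
have Ux0 : U x0 by rewrite /U /= /D Dt_self !mulr0; lra.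
have [f [Ef f01 fx0 fU]] := bump hE hEc hEd hX hXs oU Ux0.
have [g [Fg g01 gy0 gV]] := bump hF hFc hFd hY hYs oV Vy0.
pose w := TA s (TS (- (c / 2)) (TG f g)).
have ww : wf E F w by split.
have wpos : forall x y, 0 <= evalR w x y.
  move=> x y; rewrite -[evalR w x y]/(evalR s x y + (- (c/2)) * (f x * g y)).
  have sge : 0 <= evalR s x y by rewrite sR normr_ge0.
  have [fx| fxn] := eqVneq (f x) 0; first by rewrite fx mul0r mulr0 addr0.
  have [gy| gyn] := eqVneq (g y) 0; first by rewrite gy !mulr0 addr0.
  have Ux : U x by apply: contrapT => nU; move: fxn; rewrite fU // eqxx.
  have [Vy1 Vy2] : V y by apply: contrapT => nV; move: gyn; rewrite gV // eqxx.
  have {}Vy1 : 3/4 * c < evalR s x0 y := Vy1.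
  have {}Vy2 : gam y < gam y0 + 1 := Vy2.
  have l1 := lipR x y.
  have hD : 0 <= D x := Dt_ge0 _ _ _.
  have hg : 0 <= gam y := gamT_ge0 _ _.
  have kd : 0 <= K * D x := mulr_ge0 K0 hD.
  have l2 : K * (D x * gam y) <= (gam y0 + 1) * (K * D x).
    rewrite mulrA [X in _ <= X]mulrC; apply: ler_wpM2l => //; lra.
  case/andP: (f01 x) => f0 f1; case/andP: (g01 y) => g0 g1.
  have p1 : f x * g y <= 1 by nra.
  have p0 : 0 <= f x * g y by nra.
  have p2 : c / 2 * (f x * g y) <= c / 2 by nra.
  rewrite /U /= in Ux.
  rewrite mulNr; lra.
have hA := posA hE hEc hF hG hphi harch hX ww wpos.
have {}hA : le 0 (evalG join phi s + (- (c/2)) *: phi f g) := hA.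
rewrite es add0r in hA.
have c2 : (0 : R) <= 2 / c by apply: divr_ge0 => //; apply: ltW.
have hA2 := lscale hG c2 hA.
have e : 2 / c * - (c / 2) = -1.
  have cn : c != 0 by rewrite gt_eqF.
  by rewrite mulrN; congr (- _); field.
rewrite scaler0 scalerA e scaleN1r in hA2.
have hA3 := lopp hG hA2; rewrite oppr0 opprK in hA3.
have pp : le 0 (phi f g).
  apply: (ppos hF hG hphi Ef Fg); [move=> t1; by case/andP: (f01 t1)|move=> t1; by case/andP: (g01 t1)].
have pz : phi f g = 0 := lanti hG hA3 pp.
case: (hinj Ef Fg pz) => [fz|gz].
  by move: fx0; rewrite fz eqxx.
by move: gy0; rewrite gz eqxx.
Qed.

Lemma eqK s t : wf E F s -> wf E F t ->
  (evalG join phi s = evalG join phi t <-> forall x y, evalR s x y = evalR t x y).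
Proof.
move=> ws wt.
pose d := TA s (TS (-1) t).
have wd : wf E F d by split.
have ed : evalG join phi d = evalG join phi s - evalG join phi t.
  by rewrite /= scaleN1r.
have rd : forall x y, evalR d x y = evalR s x y - evalR t x y.
  by move=> x y; rewrite /= mulN1r.
split.
  move=> h x y; have h0 : evalG join phi d = 0 by rewrite ed h subrr.
  have := posB wd h0 x y; rewrite rd => /eqP; rewrite subr_eq0 => /eqP.
  done.
move=> h.
have dz : forall x y, evalR d x y = 0 by move=> x y; rewrite rd h subrr.
have p1 := posA hE hEc hF hG hphi harch hX wd (fun x y => ltac:(by rewrite (dz x y))).
have wnd : wf E F (TS (-1) d) := wd.
have dz' : forall x y, 0 <= evalR (TS (-1) d) x y.
  by move=> x y; rewrite -[evalR (TS (-1) d) x y]/((-1) * evalR d x y) dz mulr0.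
have p2 := posA hE hEc hF hG hphi harch hX wnd dz'.
have p2' : le 0 (- evalG join phi d).
  by rewrite -scaleN1r; exact: p2.
have := lopp hG p2'; rewrite oppr0 opprK => p3.
have := lanti hG p3 p1; rewrite ed => /eqP; rewrite subr_eq0 => /eqP.
done.
Qed.

End Main2.

Lemma span_sub (R : realType) (X Y : topologicalType) (E : set (X -> R)) (F : set (Y -> R))
  (G : lmodType R) (join : G -> G -> G) (phi : (X -> R) -> (Y -> R) -> G) z :
  riesz_tensor E F join phi z -> exists2 t, wf E F t & evalG join phi t = z.
Proof.
move=> H; apply: (H [set z | exists2 t, wf E F t & evalG join phi t = z]).
  split.
  - by exists TZ.
  - by move=> x y [s ws <-] [u wu <-]; exists (TA s u).
  - by move=> a x [s ws <-]; exists (TS a s).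
  - by move=> x y [s ws <-] [u wu <-]; exists (TJ s u).
by move=> w [f Ef [g Fg <-]]; exists (TG f g).
Qed.

Lemma span_sup (R : realType) (X Y : topologicalType) (E : set (X -> R)) (F : set (Y -> R))
  (G : lmodType R) (join : G -> G -> G) (phi : (X -> R) -> (Y -> R) -> G) t :
  wf E F t -> riesz_tensor E F join phi (evalG join phi t).
Proof.
move=> wt V [V0 VD VZ VJ] hS.
elim: t wt => [|f g|s hs u hu|a s hs|s hs u hu] /=.
- by [].
- by move=> [Ef Fg]; apply: hS; exists f => //; exists g.
- by move=> [/hs h1 /hu h2]; apply: VD.
- by move=> /hs h; apply: VZ.
- by move=> [/hs h1 /hu h2]; apply: VJ.
Qed.


Unset Implicit Arguments.

Theorem corollary3p5 (R : realType) (X Y : topologicalType)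
  (hX : compact [set: X]) (hXs : hausdorff_space X)
  (hY : compact [set: Y]) (hYs : hausdorff_space Y)
  (E : set (X -> R)) (F : set (Y -> R))
  (hE : riesz_subspace_CX E) (hEd : sup_dense E) (hEc : contains_constants E)
  (hF : riesz_subspace_CX F) (hFd : sup_dense F) (hFc : contains_constants F)
  (G1 : lmodType R) (le1 : G1 -> G1 -> Prop) (join1 : G1 -> G1 -> G1)
  (hG1 : archimedean_riesz_space le1 join1)
  (G2 : lmodType R) (le2 : G2 -> G2 -> Prop) (join2 : G2 -> G2 -> G2)
  (hG2 : archimedean_riesz_space le2 join2)
  (phi1 : (X -> R) -> (Y -> R) -> G1) (phi2 : (X -> R) -> (Y -> R) -> G2)
  (hphi1 : riesz_bimorphism E F join1 phi1) (hinj1 : bi_injective E F phi1)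
  (hphi2 : riesz_bimorphism E F join2 phi2) (hinj2 : bi_injective E F phi2) :
  exists T : G1 -> G2,
    [/\ riesz_iso_onto join1 join2 (riesz_tensor E F join1 phi1)
          (riesz_tensor E F join2 phi2) T,
        (forall f g, E f -> F g -> T (phi1 f g) = phi2 f g)
      & (forall T' : G1 -> G2,
          riesz_iso_onto join1 join2 (riesz_tensor E F join1 phi1)
            (riesz_tensor E F join2 phi2) T' ->
          (forall f g, E f -> F g -> T' (phi1 f g) = phi2 f g) ->
          forall x, riesz_tensor E F join1 phi1 x -> T' x = T x)].
Proof.
case: hG1 => hG1r harch1; case: hG2 => hG2r harch2.
have K1 := eqK hE hEc hEd hF hFc hFd hX hXs hY hYs hG1r harch1 hphi1 hinj1.
have K2 := eqK hE hEc hEd hF hFc hFd hX hXs hY hYs hG2r harch2 hphi2 hinj2.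
pose T := fun z : G1 =>
  match pselect (exists t, wf E F t /\ evalG join1 phi1 t = z) with
  | left H => evalG join2 phi2 (proj1_sig (cid H))
  | right _ => 0
  end.
have Tval : forall t, wf E F t -> T (evalG join1 phi1 t) = evalG join2 phi2 t.
  move=> t wt; rewrite /T; case: pselect => [H|nH]; last first.
    by exfalso; apply: nH; exists t.
  case: (cid H) => t' [wt' et'] /=.
  by apply/(K2 _ _ wt' wt); apply/(K1 _ _ wt' wt).
exists T; split.
- split.
  + split.
      move=> a b x y /(span_sub) [s ws <-] /(span_sub) [u wu <-].
      have wa : wf E F (TA (TS a s) (TS b u)) by [].
      by rewrite -[a *: _ + _]/(evalG join1 phi1 (TA (TS a s) (TS b u))) !Tval.
    move=> x y /(span_sub) [s ws <-] /(span_sub) [u wu <-].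
    have wa : wf E F (TJ s u) by [].
    by rewrite -[join1 _ _]/(evalG join1 phi1 (TJ s u)) !Tval.
  + by move=> x /(span_sub) [s ws <-]; rewrite Tval //; apply: span_sup.
  + move=> x y /(span_sub) [s ws <-] /(span_sub) [u wu <-].
    by rewrite !Tval // => h; apply/(K1 _ _ ws wu); apply/(K2 _ _ ws wu).
  + move=> z /(span_sub) [t wt <-]; exists (evalG join1 phi1 t).
      exact: span_sup.
    exact: Tval.
- move=> f g Ef Fg.
  have wg : wf E F (TG f g) by [].
  exact: (Tval _ wg).
- move=> T' [[lin hom] _ _ _] agree x /(span_sub) [t wt <-].
  rewrite Tval //.
  elim: t wt => [|f g|s hs u hu|a s hs|s hs u hu] /=.
  + move=> _; have S0 : riesz_tensor E F join1 phi1 0 by apply: (@span_sup _ _ _ _ _ _ _ _ TZ).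
    by have := lin 0 0 0 0 S0 S0; rewrite !scale0r !addr0.
  + by move=> [Ef Fg]; apply: agree.
  + move=> [ws wu]; have Ss := span_sup (join := join1) (phi := phi1) ws; have Su := span_sup (join := join1) (phi := phi1) wu.
    have := lin 1 1 _ _ Ss Su; rewrite !scale1r => ->.
    by rewrite hs // hu.
  + move=> ws0; have ws : wf E F s := ws0.
    have Ss := span_sup (join := join1) (phi := phi1) ws.
    have := lin a 0 _ _ Ss Ss; rewrite !scale0r !addr0 => ->.
    by rewrite hs.
  + move=> [ws wu]; have Ss := span_sup (join := join1) (phi := phi1) ws; have Su := span_sup (join := join1) (phi := phi1) wu.
    by rewrite hom // hs // hu.
Qed.
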